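(* Let $\mathcal A$ be a finite non-associative algebra. Then $\mathcal A$ has a qualitative representation if and only if there is a consistent atomic network $(N,\lambda)$ over $\mathcal A$ such that for every triple of atoms $(a,b,c)$ of $\mathcal A$ with $a;b\ge c$ there are nodes $x,y,z\in N$ with $\lambda(x,y)=a$, $\lambda(y,z)=b$ and $\lambda(x,z)=c$.
   Context: A non-associative algebra is an algebra $(A,0,1,+,-,1',\breve{\ },;)$ such that $(A,0,1,+,-)$ is a boolean algebra (with $x\cdot y=-(-x+-y)$ and $x\le y\iff x+y=y$); $1';x=x=x;1'$, $\breve{\breve x}=x$, $(x;y)\breve{}=\breve y;\breve x$; $\breve 0=x;0=0$, $(x+y)\breve{}=\breve x+\breve y$, $x;(y+z)=x;y+x;z$; and the Peircean law holds: $x;y\cdot\breve z=0$ iff $y;z\cdot\breve x=0$. An atom is a minimal nonzero element. A qualitative representation of $\mathcal A$ over base $D$ is an injective map $\phi:A\to\wp(D\times D)$ such that $0^\phi=\varnothing$, $1^\phi=D\times D$, $(1')^\phi=\{(x,x):x\in D\}$, $(a+b)^\phi=a^\phi\cup b^\phi$, $(-a)^\phi=(D\times D)\setminus a^\phi$, $(\breve a)^\phi=\{(y,x):(x,y)\in a^\phi\}$, and for all $a,b,c\in A$: $c^\phi\supseteq a^\phi\circ b^\phi\iff c\ge a;b$ (where $r\circ s$ is relational composition). A network over $\mathcal A$ is a pair $(N,\lambda)$ with $N$ a finite set and $\lambda:N\times N\to A$. It is consistent if for all $x,y,z\in N$: $\lambda(x,x)\le 1'$; $\lambda(x,y);\lambda(y,z)\cdot\lambda(x,z)\ne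 0$; $\lambda(x,y)\cdot\lambda(y,x)\breve{}\ne0$; $\lambda(x,y)\ne 0$. It is atomic if every $\lambda(x,y)$ is an atom. *)

(* Defs.v *)
(* A finite boolean algebra is a finite complemented
   distributive lattice with top and bottom (finCTBDistrLatticeType):
   0 = \bot, 1 = \top, x + y = x `|` y, -x = ~` x, x . y = x `&` y,
   x <= y is the lattice order. *)
From HB Require Import structures.
From mathcomp Require Import all_boot all_order.
Set Implicit Arguments. Unset Strict Implicit. Unset Printing Implicit Defensive.
Import Order.Theory.
Local Open Scope order_scope.

(* The non-boolean part of a non-associative algebra on a boolean algebra A. *)
Record NAlg (d : Order.disp_t) (A : finCTBDistrLatticeType d) := NAlgMk {
  nid : A;
  ncv : A -> A;
  ncomp : A -> A -> A;
  ax_idl : forall x, ncomp nid x = x;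
  ax_idr : forall x, ncomp x nid = x;
  ax_cvcv : forall x, ncv (ncv x) = x;
  ax_cvcomp : forall x y, ncv (ncomp x y) = ncomp (ncv y) (ncv x);
  ax_cv0 : ncv \bot = \bot;
  ax_comp0 : forall x, ncomp x \bot = \bot;
  ax_cvD : forall x y, ncv (x `|` y) = ncv x `|` ncv y;
  ax_compD : forall x y z, ncomp x (y `|` z) = ncomp x y `|` ncomp x z;
  ax_peirce : forall x y z,
    (ncomp x y `&` ncv z = \bot) <-> (ncomp y z `&` ncv x = \bot)
}.

Section Defs.
Context (d : Order.disp_t) (A : finCTBDistrLatticeType d) (S : NAlg A).

Definition is_atom (a : A) : Prop :=
  a <> \bot /\ forall b : A, b <= a -> b <> \bot -> b = a.

Definition rcomp (D : Type) (r s : D -> D -> Prop) : D -> D -> Prop :=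
  fun x z => exists y, r x y /\ s y z.

Definition is_qrep (D : Type) (phi : A -> D -> D -> Prop) : Prop :=
  injective phi /\
  (forall x y, ~ phi \bot x y) /\
  (forall x y, phi \top x y) /\
  (forall x y, phi (nid S) x y <-> x = y) /\
  (forall a b x y, phi (a `|` b) x y <-> (phi a x y \/ phi b x y)) /\
  (forall a x y, phi (~` a) x y <-> ~ phi a x y) /\
  (forall a x y, phi (ncv S a) x y <-> phi a y x) /\
  (forall a b c,
     (forall x y, rcomp (phi a) (phi b) x y -> phi c x y)
     <-> ncomp S a b <= c).

Definition has_qrep : Prop :=
  exists (D : Type) (phi : A -> D -> D -> Prop), is_qrep phi.

Definition consistent_net (N : finType) (lam : N -> N -> A) : Prop :=
  forall x y z : N,
    [/\ lam x x <= nid S,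
        ncomp S (lam x y) (lam y z) `&` lam x z <> \bot,
        lam x y `&` ncv S (lam y x) <> \bot &
        lam x y <> \bot].

Definition atomic_net (N : finType) (lam : N -> N -> A) : Prop :=
  forall x y : N, is_atom (lam x y).

End Defs.

(* Main.v *)
Require Import Defs.
From HB Require Import structures.
From mathcomp Require Import all_boot all_order.
From Stdlib Require Import Classical ClassicalEpsilon.
Import Order.Theory.
Local Open Scope order_scope.

Section Basics.
Context (d : Order.disp_t) (A : finCTBDistrLatticeType d) (S : NAlg A).

Lemma atom_meet (a b : A) : is_atom a -> a `&` b = \bot \/ a <= b.
Proof.
move=> [a0 ha]; have [->|nb] := eqVneq (a `&` b) \bot; first by left.
right; rewrite -leIidl; have := ha _ (leIl a b) (elimN eqP nb) => ->; exact: le_refl.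
Qed.

Lemma atoms_eq (a b : A) : is_atom a -> is_atom b -> a `&` b <> \bot -> a = b.
Proof.
move=> ha [b0 hb] nab; case: (atom_meet a b ha) => // ab.
by apply: hb => // ; case: ha.
Qed.

Lemma atom_le_join (a p q : A) : is_atom a -> a <= p `|` q -> a <= p \/ a <= q.
Proof.
move=> ha le; case: (atom_meet a p ha) => hp; last by left.
case: (atom_meet a q ha) => hq; last by right.
case: ha => a0 _; exfalso; apply: a0.
by rewrite -(meet_l le) meetUr hp hq joinx0.
Qed.

Lemma le_compl_of_disj (x y : A) : x `&` y = \bot -> x <= ~` y.
Proof. by move=> h; rewrite -disj_leC h. Qed.

Lemma le_both_bot (x y : A) : x <= y -> x <= ~` y -> x = \bot.
Proof.
move=> h1 h2; apply/eqP; rewrite -lex0 -(meetxC y) lexI h1 h2 //.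
Qed.

Lemma comp_monor (x y y' : A) : y <= y' -> ncomp S x y <= ncomp S x y'.
Proof. by move=> /join_idPr <-; rewrite ax_compD leUl. Qed.

Lemma cv_mono (x y : A) : x <= y -> ncv S x <= ncv S y.
Proof. by move=> /join_idPr <-; rewrite ax_cvD leUl. Qed.

Lemma comp_distl (p q y : A) :
  ncomp S (p `|` q) y = ncomp S p y `|` ncomp S q y.
Proof.
rewrite -[LHS](ax_cvcv S) ax_cvcomp ax_cvD ax_compD ax_cvD !ax_cvcomp !ax_cvcv.
by [].
Qed.

Lemma comp_monol (x x' y : A) : x <= x' -> ncomp S x y <= ncomp S x' y.
Proof. by move=> /join_idPr <-; rewrite comp_distl leUl. Qed.

Definition atomb (a : A) : bool :=
  (a != \bot) && [forall b, (b <= a) ==> (b != \bot) ==> (b == a)].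

Lemma atomP (a : A) : reflect (is_atom a) (atomb a).
Proof.
apply: (iffP andP) => [[/eqP a0 /forallP h]|[a0 h]]; split => //.
- by move=> b ba b0; move: (h b); rewrite ba /=; move/eqP: b0 => -> /eqP.
- exact/eqP.
- apply/forallP => b; apply/implyP => ba; apply/implyP => /eqP b0.
  by apply/eqP; apply: h.
Qed.

Lemma atom_below (Q : A -> Prop) :
  ~ Q \bot -> (forall p q, Q (p `|` q) -> Q p \/ Q q) ->
  forall e, Q e -> exists a, [/\ is_atom a, a <= e & Q a].
Proof.
move=> Q0 Qs e; move: {2}#|[pred x | x < e]| (leqnn #|[pred x | x < e]|) => n.
elim: n e => [|n IH] e hn Qe.
- exists e; split => //; split; first by move=> e0; apply: Q0; rewrite -e0.
  move=> b be b0; apply/eqP; apply: contraT => neb.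
  have bin : b \in [pred x | x < e] by rewrite inE lt_neqAle neb be.
  by move: hn; rewrite leqn0 => /eqP/card0_eq/(_ b); rewrite bin.
- have [/existsP [b /andP [/andP [be b0] bne]]|nex] :=
    boolP [exists b, (b <= e) && (b != \bot) && (b != e)]; last first.
  + exists e; split => //; split; first by move=> e0; apply: Q0; rewrite -e0.
    move=> b be /eqP b0; apply/eqP; apply: contraT => neb; case/negP: nex.
    by apply/existsP; exists b; rewrite be b0 neb.
  have lt_card : forall f, f < e -> (#|[pred x : A | (x < f)%O]| <= n)%N.
    move=> f fe; rewrite -ltnS; apply: leq_trans hn; apply: proper_card.
    apply/properP; split.
    * by apply/subsetP => x; rewrite !inE => xf; apply: lt_trans fe.
    * by exists f; [rewrite inE | rewrite inE ltxx].
  have eq_e : e = b `|` (e `&` ~` b).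
    by rewrite joinIr joinxC meetx1 (join_r be).
  rewrite eq_e in Qe; case: (Qs _ _ Qe) => Qp.
  + have lb : b < e by rewrite lt_neqAle bne be.
    have [a [ha ab Qa]] := IH b (lt_card b lb) Qp.
    by exists a; split => //; apply: le_trans be.
  + have lt2 : e `&` ~` b < e.
      rewrite lt_neqAle leIl andbT; apply/eqP => h.
      have : b <= ~` b by rewrite -h in be; apply: le_trans be (leIr _ _).
      by move/(le_both_bot _ _ (le_refl b))/eqP; rewrite (negPf b0).
    have [a [ha ab Qa]] := IH _ (lt_card _ lt2) Qp.
    by exists a; split => //; apply: le_trans ab (ltW lt2).
Qed.


Lemma comp0l (y : A) : ncomp S \bot y = \bot.
Proof. by rewrite -[LHS](ax_cvcv S) ax_cvcomp ax_cv0 ax_comp0 ax_cv0. Qed.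

Lemma ne_join (p q : A) : p `|` q <> \bot -> p <> \bot \/ q <> \bot.
Proof.
move=> h; have [p0|] := eqVneq p \bot; last by move/eqP; left.
by right => q0; apply: h; rewrite p0 q0 joinx0.
Qed.

Lemma meet_ne_mono (p q r : A) : p <= q -> p `&` r <> \bot -> q `&` r <> \bot.
Proof.
move=> pq h e; apply: h; apply/eqP; rewrite -lex0 -e lexI leIr andbT.
exact: le_trans (leIl _ _) pq.
Qed.

Lemma atom_below_meet (f : A -> A) (g e : A) :
  (forall p q, f (p `|` q) = f p `|` f q) -> f \bot = \bot ->
  g `&` f e <> \bot -> exists a, [/\ is_atom a, a <= e & g `&` f a <> \bot].
Proof.
move=> fD f0; apply: (atom_below (fun y => g `&` f y <> \bot)).
- by rewrite f0 meetx0.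
- by move=> p q; rewrite fD meetUr => /ne_join.
Qed.

Lemma atom_below_ne (e : A) : e <> \bot -> exists a, is_atom a /\ a <= e.
Proof.
move=> h; have [] := @atom_below_meet id \top e (fun _ _ => erefl) erefl.
  by rewrite meet1x.
by move=> a [ha ae _]; exists a.
Qed.

Lemma atom_le_or_compl (a b : A) : is_atom a -> a <= b \/ a <= ~` b.
Proof.
move=> ha; case: (atom_meet a b ha) => h; [right; exact: le_compl_of_disj | by left].
Qed.

Lemma not_le_meet (a c : A) : ~~ (a <= c) -> a `&` ~` c <> \bot.
Proof.
move=> h e; move/negP: h; apply; rewrite -[c]complK; exact: le_compl_of_disj.
Qed.

End Basics.

Arguments atom_meet {d A}. Arguments atom_le_or_compl {d A}.
Arguments atoms_eq {d A a b}. Arguments atom_le_join {d A a p q}.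
Arguments le_compl_of_disj {d A x y}. Arguments le_both_bot {d A x y}.
Arguments comp_monor {d A} S {x y y'}. Arguments comp_monol {d A} S {x x' y}.
Arguments cv_mono {d A} S {x y}. Arguments comp_distl {d A} S.
Arguments comp0l {d A} S. Arguments ne_join {d A p q}.
Arguments meet_ne_mono {d A p q r}. Arguments atom_below_meet {d A f g e}.
Arguments atom_below_ne {d A e}. Arguments not_le_meet {d A a c}.
Arguments atom_below {d A}. Arguments atomb {d A}. Arguments atomP {d A}.


Section Net.
Context (d : Order.disp_t) (A : finCTBDistrLatticeType d) (S : NAlg A).
Context (N : finType) (lam : N -> N -> A) (Hc : consistent_net S lam)
  (Ha : atomic_net lam)
  (Ht : forall a b c : A, is_atom a -> is_atom b -> is_atom c ->
          c <= ncomp S a b ->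
          exists x y z : N, [/\ lam x y = a, lam y z = b & lam x z = c]).

Lemma cong_r x y z : lam y z <= nid S -> lam x z = lam x y.
Proof.
move=> h; have [_ H _ _] := Hc x y z.
have le1 : ncomp S (lam x y) (lam y z) <= lam x y.
  by rewrite -[X in _ <= X](ax_idr S); apply: comp_monor.
have := meet_ne_mono le1 H; rewrite meetC; exact: atoms_eq.
Qed.

Lemma cong_l x y z : lam x y <= nid S -> lam x z = lam y z.
Proof.
move=> h; have [_ H _ _] := Hc x y z.
have le1 : ncomp S (lam x y) (lam y z) <= lam y z.
  by rewrite -[X in _ <= X](ax_idl S); apply: comp_monol.
have := meet_ne_mono le1 H; rewrite meetC; exact: atoms_eq.
Qed.

Lemma lam_refl x : lam x x <= nid S.
Proof. by have [] := Hc x x x. Qed.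

Lemma cv_lam x y : lam x y = ncv S (lam y x).
Proof.
have le1 : forall u v, lam u v <= ncv S (lam v u).
  move=> u v; have [_ _ H _] := Hc u v u.
  by case: (atom_meet (lam u v) (ncv S (lam v u)) (Ha u v)).
apply: le_anti; rewrite le1 /=.
by rewrite -[X in _ <= X](ax_cvcv S); apply: cv_mono.
Qed.

Definition canonP (x : N) : pred N := fun y => (lam x y <= nid S)%O.
Definition canon (x : N) : N :=
  fintype.arg_min x (canonP x) (fun y => nat_of_ord (enum_rank y)).

Lemma canon_spec x : lam x (canon x) <= nid S.
Proof.
rewrite /canon; case: (@arg_minnP _ x (canonP x) (fun y => nat_of_ord (enum_rank y)) (lam_refl x)).
by move=> i Pi _.
Qed.

Lemma canon_eq x x' : lam x x' <= nid S -> canon x = canon x'.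
Proof.
move=> h; have E : forall y, lam x y = lam x' y by move=> y; apply: cong_l.
rewrite /canon.
case: (@arg_minnP _ x (canonP x) (fun y => nat_of_ord (enum_rank y)) (lam_refl x)).
move=> c Pc minc.
case: (@arg_minnP _ x' (canonP x') (fun y => nat_of_ord (enum_rank y)) (lam_refl x')).
move=> c' Pc' minc'; apply: enum_rank_inj; apply: val_inj; apply/eqP; rewrite eqn_leq.
by apply/andP; split; [apply: minc; rewrite /canonP E | apply: minc'; rewrite /canonP -E].
Qed.

Lemma canon_idem x : canon (canon x) = canon x.
Proof. by symmetry; apply: canon_eq; apply: canon_spec. Qed.

Lemma lam_canon x y : lam (canon x) (canon y) = lam x y.
Proof.
rewrite -(cong_l x (canon x) (canon y) (canon_spec x)); apply: cong_r; exact: canon_spec.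
Qed.

Definition DD := {x : N | canon x == x}.
Definition toD (x : N) : DD := exist _ (canon x) (introT eqP (canon_idem x)).
Definition phiN (a : A) (u v : DD) : Prop := lam (val u) (val v) <= a.

Lemma realize g : is_atom g -> exists x z, lam x z = g.
Proof.
move=> hg; have gne : g `&` ncomp S g (nid S) <> \bot.
  by rewrite ax_idr meetxx; case: hg.
have [e [he _ Qe]] := @atom_below_meet _ _ (ncomp S g) g _ (ax_compD S g) (ax_comp0 S g) gne.
have ge : g <= ncomp S g e by case: (atom_meet g (ncomp S g e) hg).
by have [x [y [z [_ _ <-]]]] := Ht g e g hg he hg ge; exists x, z.
Qed.

Lemma phiN_toD a x z : phiN a (toD x) (toD z) = (lam x z <= a).
Proof. by rewrite /phiN /= lam_canon. Qed.

Lemma net_qrep : is_qrep S phiN.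
Proof.
split; [|split; [|split; [|split; [|split; [|split; [|split]]]]]].
- have sub : forall a b, phiN a = phiN b -> a <= b.
    move=> a b E; apply: contraT => nab.
    have [g [hg ga]] := atom_below_ne (not_le_meet nab).
    have [x [z xz]] := realize g hg.
    have : phiN a (toD x) (toD z) by rewrite phiN_toD xz (le_trans ga) ?leIl.
    rewrite E phiN_toD xz => gb.
    by case: hg => g0 _; exfalso; apply: g0; apply: le_both_bot gb (le_trans ga (leIr _ _)).
  by move=> a b E; apply: le_anti; rewrite !sub.
- move=> u v; rewrite /phiN lex0 => /eqP; by case: (Ha (val u) (val v)).
- by move=> u v; rewrite /phiN lex1.
- move=> u v; split; last by move=> ->; exact: lam_refl.
  rewrite /phiN => h; apply: val_inj.
  by rewrite -(eqP (valP u)) -(eqP (valP v)); apply: canon_eq.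
- move=> a b u v; rewrite /phiN; split.
  + exact: atom_le_join (Ha _ _).
  + by case=> h; apply: le_trans h _; rewrite ?leUl ?leUr.
- move=> a u v; rewrite /phiN; split.
  + by move=> h1 h2; case: (Ha (val u) (val v)) => g0 _; apply: g0; apply: le_both_bot h2 h1.
  + by move=> h; case: (atom_le_or_compl _ a (Ha (val u) (val v))) => // /h.
- move=> a u v; rewrite /phiN cv_lam; split; last exact: cv_mono.
  by move/(cv_mono S); rewrite !ax_cvcv.
- move=> a b c; split.
  + move=> H; apply: contraT => nab.
    have [g [hg gle]] := atom_below_ne (not_le_meet nab).
    have gab : g `&` ncomp S a b <> \bot.
      by rewrite (meet_l (le_trans gle (leIl _ _))); case: hg.
    have [a' [ha' a'a Q1]] := @atom_below_meet _ _ (fun y => ncomp S y b) g _ (fun p q => comp_distl S p q b) (comp0l S b) gab.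
    have [b' [hb' b'b Q2]] := @atom_below_meet _ _ (ncomp S a') g _ (ax_compD S a') (ax_comp0 S a') Q1.
    have gle' : g <= ncomp S a' b' by case: (atom_meet g (ncomp S a' b') hg).
    have [x [y [z [xy yz xz]]]] := Ht a' b' g ha' hb' hg gle'.
    have : phiN c (toD x) (toD z).
      apply: H; exists (toD y); by rewrite !phiN_toD ?xy ?yz.
    rewrite phiN_toD xz => gc.
    by case: hg => g0 _; exfalso; apply: g0; apply: le_both_bot gc (le_trans gle (leIr _ _)).
  + move=> abc u w [v [h1 h2]]; rewrite /phiN.
    have [_ H _ _] := Hc (val u) (val v) (val w).
    have le1 : ncomp S (lam (val u) (val v)) (lam (val v) (val w)) <= c.
      apply: (le_trans _ abc); apply: (le_trans (comp_monol S h1)).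
      exact: comp_monor.
    have H2 := meet_ne_mono le1 H; rewrite meetC in H2.
    by case: (atom_meet (lam (val u) (val w)) c (Ha _ _)) => // E; rewrite E in H2.
Qed.

End Net.

Section Rep.
Context (d : Order.disp_t) (A : finCTBDistrLatticeType d) (S : NAlg A).
Context (D : Type) (phi : A -> D -> D -> Prop) (Hq : is_qrep S phi).

Lemma phi0 x y : ~ phi \bot x y. Proof. by case: Hq => _ [h _]. Qed.
Lemma phiU a b x y : phi (a `|` b) x y <-> phi a x y \/ phi b x y.
Proof. by case: Hq => _ [_ [_ [_ [h _]]]]. Qed.
Lemma phiC a x y : phi (~` a) x y <-> ~ phi a x y.
Proof. by case: Hq => _ [_ [_ [_ [_ [h _]]]]]. Qed.
Lemma phiT x y : phi \top x y. Proof. by case: Hq => _ [_ [h _]]. Qed.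
Lemma phiI x y : phi (nid S) x y <-> x = y.
Proof. by case: Hq => _ [_ [_ [h _]]]. Qed.
Lemma phiV a x y : phi (ncv S a) x y <-> phi a y x.
Proof. by case: Hq => _ [_ [_ [_ [_ [_ [h _]]]]]]. Qed.
Lemma phiM a b c :
  (forall x y, rcomp (phi a) (phi b) x y -> phi c x y) <-> ncomp S a b <= c.
Proof. by case: Hq => _ [_ [_ [_ [_ [_ [_ h]]]]]]. Qed.

Lemma phi_mono a b x y : a <= b -> phi a x y -> phi b x y.
Proof. by move=> /join_idPr <- pa; apply/phiU; left. Qed.

Lemma phi_meet a b x y : phi (a `&` b) x y <-> phi a x y /\ phi b x y.
Proof.
have -> : a `&` b = ~` (~` a `|` ~` b) by rewrite complU !complK.
rewrite phiC phiU !phiC; split.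
- by move=> h; split; apply: NNPP => h'; apply: h; [left|right].
- by case=> h1 h2 [].
Qed.

Lemma phi_ex_atom x y : exists a, is_atom a /\ phi a x y.
Proof.
have [a [ha _ pa]] := atom_below (fun e => phi e x y) (@phi0 x y)
  (fun p q => proj1 (phiU p q x y)) \top (phiT x y).
by exists a.
Qed.

Lemma phi_atom_uniq a b x y : is_atom a -> is_atom b ->
  phi a x y -> phi b x y -> a = b.
Proof.
move=> ha hb pa pb; apply: (atoms_eq ha hb) => e.
by apply: (@phi0 x y); rewrite -e; apply/phi_meet.
Qed.

Lemma witness_ex a b c : is_atom c -> c <= ncomp S a b ->
  exists p : D * D * D, [/\ phi a p.1.1 p.1.2, phi b p.1.2 p.2 & phi c p.1.1 p.2].
Proof.
move=> hc cab; apply: NNPP => H.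
have : ncomp S a b <= ~` c.
  apply/phiM => x z [y [h1 h2]]; apply/phiC => h3; apply: H.
  by exists (x, y, z).
move=> abc; case: hc => c0 _; apply: c0.
exact: le_both_bot (le_refl c) (le_trans cab abc).
Qed.

Definition trip (t : A * A * A) : bool :=
  [&& atomb t.1.1, atomb t.1.2, atomb t.2 & t.2 <= ncomp S t.1.1 t.1.2].

Definition Tr := {t : A * A * A | trip t}.

Lemma witness_ex_Tr (t : Tr) :
  exists p : D * D * D, [/\ phi (val t).1.1 p.1.1 p.1.2,
     phi (val t).1.2 p.1.2 p.2 & phi (val t).2 p.1.1 p.2].
Proof.
case: t => [[[a b] c]] /= /and4P [_ _ /atomP hc cab].
exact: witness_ex hc cab.
Qed.

Definition wit (t : Tr) : D * D * D :=
  proj1_sig (constructive_indefinite_description _ (witness_ex_Tr t)).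

Lemma wit_spec (t : Tr) : [/\ phi (val t).1.1 (wit t).1.1 (wit t).1.2,
     phi (val t).1.2 (wit t).1.2 (wit t).2 & phi (val t).2 (wit t).1.1 (wit t).2].
Proof. exact: proj2_sig (constructive_indefinite_description _ (witness_ex_Tr t)). Qed.

Definition NN := (Tr * 'I_3)%type.

Definition pt (n : NN) : D :=
  if val n.2 == 0%N then (wit n.1).1.1
  else if val n.2 == 1%N then (wit n.1).1.2 else (wit n.1).2.

Definition lamR (n m : NN) : A :=
  proj1_sig (constructive_indefinite_description _ (phi_ex_atom (pt n) (pt m))).

Lemma lamR_spec n m : is_atom (lamR n m) /\ phi (lamR n m) (pt n) (pt m).
Proof. exact: proj2_sig (constructive_indefinite_description _ (phi_ex_atom (pt n) (pt m))). Qed.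

Lemma lamR_eq n m a : is_atom a -> phi a (pt n) (pt m) -> lamR n m = a.
Proof.
move=> ha pa; have [h1 h2] := lamR_spec n m; exact: phi_atom_uniq h1 ha h2 pa.
Qed.

Lemma rep_net : exists (N : finType) (lam : N -> N -> A),
    [/\ consistent_net S lam, atomic_net lam &
        forall a b c : A, is_atom a -> is_atom b -> is_atom c ->
          c <= ncomp S a b ->
          exists x y z : N, [/\ lam x y = a, lam y z = b & lam x z = c]].
Proof.
exists NN, lamR; split.
- move=> x y z; split.
  + have [ha pa] := lamR_spec x x.
    case: (atom_le_or_compl _ (nid S) ha) => // h.
    exfalso; apply: (proj1 (phiC _ _ _) (phi_mono _ _ _ _ h pa)).
    by apply/phiI.
  + set a := lamR x y; set b := lamR y z; set c := lamR x z => e.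
    have [_ pa] := lamR_spec x y; have [_ pb] := lamR_spec y z.
    have [_ pc] := lamR_spec x z.
    have le1 : ncomp S a b <= ~` c by apply: le_compl_of_disj.
    have := (proj2 (phiM a b (~` c)) le1) (pt x) (pt z).
    by move/(_ (ex_intro _ (pt y) (conj pa pb)))/phiC.
  + move=> e; have [_ pa] := lamR_spec x y; have [_ pb] := lamR_spec y x.
    apply: (@phi0 (pt x) (pt y)); rewrite -e; apply/phi_meet; split => //.
    exact/phiV.
  + by case: (lamR_spec x y) => [[]].
- by move=> x y; case: (lamR_spec x y).
- move=> a b c ha hb hc cab.
  have tr : trip (a, b, c).
    by rewrite /trip /=; apply/and4P; split => //; apply/atomP.
  pose t : Tr := exist _ (a, b, c) tr.
  have [p1 p2 p3] := wit_spec t.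
  exists (t, Ordinal (isT : (0 < 3)%N)), (t, Ordinal (isT : (1 < 3)%N)),
    (t, Ordinal (isT : (2 < 3)%N)).
  by split; apply: lamR_eq.
Qed.

End Rep.

Theorem mainTheorem5 (d : Order.disp_t) (A : finCTBDistrLatticeType d)
    (S : NAlg A) :
  has_qrep S <->
  exists (N : finType) (lam : N -> N -> A),
    [/\ consistent_net S lam, atomic_net lam &
        forall a b c : A, is_atom a -> is_atom b -> is_atom c ->
          c <= ncomp S a b ->
          exists x y z : N, [/\ lam x y = a, lam y z = b & lam x z = c]].
Proof.
split.
- by case=> D [phi Hq]; exact: rep_net Hq.
- case=> N [lam [Hc Ha Ht]].
  by eexists; eexists; apply: (@net_qrep d A S N lam Hc Ha Ht).
Qed.
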